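(* Let $R>0$ and $\Theta=(\alpha,\rho_r,\rho_d,\rho_s,\rho_0,T)$ with $\alpha>1$, $\rho_r,\rho_d,\rho_s,\rho_0>0$, $T>1$, and set $\beta=\rho_d/\rho_r$, $\delta=\rho_s/\rho_r$, $\mu=\rho_0/\rho_r$, $K_{max}(\Theta)=\min\big(\frac T4,\frac1{3\mu},\frac{3\beta}{2\mu}\big)$. Suppose (A) $K_{max}(\Theta)>10$; (D.1) $\rho_r>\frac{\alpha}{2\delta}$; (D.2) $\rho_r>\frac{3\alpha}{4(1+\beta)^2R}\,g^2\!\big(\frac{4R}{3K_{max}(\Theta)}\big)$; (D.3) $\rho_r<\frac{\alpha}{(1+\beta)^2}\frac{g^2(R)}{R}$. Then $\frac38<\frac{\zeta'_{zf}(R,\Theta)}{\zeta'_{csi}(R,\Theta)}<1$.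
   Context: $g(x)=\sqrt{\frac{x}{2^x-1}}\big(2^x x\ln2-2^x+1\big)$, $x>0$. For reals $M>K$, $1\le K\le\tau<T$, let $$\gamma_u=\frac{K+\tau}{2\tau(M-K)}\Big(2^{\frac{R}{K(1-\tau/T)}}-1\Big)+\sqrt{\Big(\frac{K+\tau}{2\tau(M-K)}\Big(2^{\frac{R}{K(1-\tau/T)}}-1\Big)\Big)^2+\frac{2^{\frac{R}{K(1-\tau/T)}}-1}{\tau(M-K)}},$$ $$\frac{R}{\zeta_{zf}(M,K,\tau,R,\Theta)}=\alpha K\gamma_u+\rho_s+K\Big(\rho_d+\frac{8K^2\rho_0}{3T}\Big)+M\Big(\rho_r+2K\rho_0+\frac{4K^2\rho_0}{T}\Big).$$ $\zeta'_{zf}(R,\Theta)$ is the supremum of $\zeta_{zf}(M,K,\tau,R,\Theta)$ over real $(M,K,\tau)$ with $1\le K\le K_{max}(\Theta)$, $K\le\tau<T$, $M>K$. For real $M>K\ge1$, $$\frac{1}{\zeta_{csi}(M,K,R,\Theta)}=\frac1R\Big[\frac{\alpha K}{M-K}\big(2^{R/K}-1\big)+M\rho_r+K\rho_d+\rho_s\Big],$$ and $\zeta'_{csi}(R,\Theta)$ is the maximum of $\zeta_{csi}(M,K,R,\Theta)$ over real $(M,K)$ with $1\le K\le K_{max}(\Theta)$, $M>K$. *)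

(* Defs.v *)
From Stdlib Require Import Reals.
Open Scope R_scope.

Definition pow2 (x : R) : R := Rpower 2 x.

Definition g (x : R) : R :=
  sqrt (x / (pow2 x - 1)) * (pow2 x * x * ln 2 - pow2 x + 1).

Definition Kmax (rho_r rho_d rho_0 T : R) : R :=
  let beta := rho_d / rho_r in
  let mu := rho_0 / rho_r in
  Rmin (T / 4) (Rmin (1 / (3 * mu)) (3 * beta / (2 * mu))).

Definition gamma_u (M K tau Rr T : R) : R :=
  let E := pow2 (Rr / (K * (1 - tau / T))) - 1 in
  let c := (K + tau) / (2 * tau * (M - K)) * E in
  c + sqrt (c ^ 2 + E / (tau * (M - K))).

Definition zeta_zf (M K tau Rr alpha rho_r rho_d rho_s rho_0 T : R) : R :=
  Rr / (alpha * K * gamma_u M K tau Rr T + rho_s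
        + K * (rho_d + 8 * K ^ 2 * rho_0 / (3 * T))
        + M * (rho_r + 2 * K * rho_0 + 4 * K ^ 2 * rho_0 / T)).

Definition zeta_csi (M K Rr alpha rho_r rho_d rho_s : R) : R :=
  / ((1 / Rr) * (alpha * K / (M - K) * (pow2 (Rr / K) - 1)
                 + M * rho_r + K * rho_d + rho_s)).

Definition zf_values (Rr alpha rho_r rho_d rho_s rho_0 T : R) (z : R) : Prop :=
  exists M K tau : R,
    1 <= K <= Kmax rho_r rho_d rho_0 T /\ K <= tau < T /\ M > K /\
    z = zeta_zf M K tau Rr alpha rho_r rho_d rho_s rho_0 T.

Definition csi_values (Rr alpha rho_r rho_d rho_s rho_0 T : R) (z : R) : Prop :=
  exists M K : R,
    1 <= K <= Kmax rho_r rho_d rho_0 T /\ M > K /\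
    z = zeta_csi M K Rr alpha rho_r rho_d rho_s.

Definition is_zeta'_zf (Rr alpha rho_r rho_d rho_s rho_0 T z : R) : Prop :=
  is_lub (zf_values Rr alpha rho_r rho_d rho_s rho_0 T) z.

Definition is_zeta'_csi (Rr alpha rho_r rho_d rho_s rho_0 T z : R) : Prop :=
  csi_values Rr alpha rho_r rho_d rho_s rho_0 T z /\
  is_upper_bound (csi_values Rr alpha rho_r rho_d rho_s rho_0 T) z.

(* Main.v *)
Require Import Defs.
From Stdlib Require Import Reals.
From Stdlib Require Import FunctionalExtensionality.
From Stdlib Require Import Reals Lra Psatz.
Open Scope R_scope.

Lemma le_sqrt_of_sq x A : 0 <= x -> x * x <= A -> x <= sqrt A.
Proof. intros Hx H. rewrite <- (sqrt_square x Hx). apply sqrt_le_1_alt; lra. Qed.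

Lemma sqrt_le_of_sq x A : 0 <= x -> A <= x * x -> sqrt A <= x.
Proof. intros Hx H. rewrite <- (sqrt_square x Hx). apply sqrt_le_1_alt; lra. Qed.

Lemma amgm x y : 0 <= x -> 0 <= y -> 2 * sqrt (x * y) <= x + y.
Proof.
  intros Hx Hy. assert (H := sqrt_sqrt (x*y) (Rmult_le_pos _ _ Hx Hy)).
  assert (H0 := sqrt_pos (x*y)).
  destruct (Rle_lt_dec (2 * sqrt (x*y)) (x+y)) as [h|h]; [exact h|].
  exfalso. assert (H1: (x+y)*(x+y) < (2*sqrt(x*y))*(2*sqrt(x*y))) by (apply Rmult_le_0_lt_compat; lra).
  replace (2*sqrt(x*y)*(2*sqrt(x*y))) with (4*(sqrt(x*y)*sqrt(x*y))) in H1 by ring.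
  rewrite H in H1. assert (0 <= (x-y)*(x-y)) by apply Rle_0_sqr. lra.
Qed.

Lemma bern w a : 0 < a -> 0 <= w <= a -> exp w <= (w/a) * exp a + (1 - w/a).
Proof.
  intros Ha Hw.
  assert (H1 := exp_ineq1_le (a - w)).
  assert (H2 := exp_ineq1_le (0 - w)).
  assert (E1 : exp a = exp w * exp (a - w)) by (rewrite <- exp_plus; f_equal; ring).
  assert (E2 : 1 = exp w * exp (0 - w)) by (rewrite <- exp_plus, <- exp_0; f_equal; ring).
  assert (Hp := exp_pos w).
  set (d := w / a).
  assert (Hd : w = d * a) by (unfold d; field; lra).
  assert (0 <= d <= 1). { split; unfold d. apply Rmult_le_pos; [lra| left; apply Rinv_0_lt_compat; lra].
    apply Rmult_le_reg_r with a; [lra|]. unfold Rdiv. rewrite Rmult_assoc, Rinv_l; lra. }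
  assert (Hs : 1 <= d * exp (a - w) + (1 - d) * exp (0 - w)) by nra.
  rewrite E1. replace (1 - d) with ((1-d) * (exp w * exp (0 - w))) at 1 by (rewrite <- E2; ring).
  assert (0 <= exp w * (d * exp (a - w) + (1 - d) * exp (0 - w) - 1)) by (apply Rmult_le_pos; lra).
  nra.
Qed.

Lemma key_poly a w nu : 0 < w -> 4 * w <= a -> 0 < nu -> 1 - w/2 <= nu -> nu < 7/8 ->
  0 <= 2 * w * (a - 1) + (32/7 * nu - 4) * (a - w).
Proof.
  intros. assert (Hk: 0 <= 2*w - (4 - 32/7*nu)).
  { destruct (Rle_lt_dec 2 w); nra. }
  nra.
Qed.
Lemma gamma_bounds E K tau m : 0 < E -> 0 < K <= tau -> 0 < m ->
  let c := (K+tau)/(2*tau*m)*E in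
  2*c <= c + sqrt (c^2 + E/(tau*m)) <= 2*c + 1/(K+tau).
Proof.
  intros HE HK Hm c.
  assert (Hc : 0 < c). { unfold c. apply Rmult_lt_0_compat; [|lra].
    apply Rdiv_lt_0_compat; [lra|]. apply Rmult_lt_0_compat; lra. }
  assert (Hu : 0 < E/(tau*m)) by (apply Rdiv_lt_0_compat; nra).
  assert (Hcu : E/(tau*m) = 2*c/(K+tau)) by (unfold c; field; lra).
  split.
  - assert (c <= sqrt (c^2 + E/(tau*m))) by (apply le_sqrt_of_sq; nra). lra.
  - assert (sqrt (c^2 + E/(tau*m)) <= c + 1/(K+tau)).
    { apply sqrt_le_of_sq. assert (0 < 1/(K+tau)) by (apply Rdiv_lt_0_compat; lra). lra.
      rewrite Hcu. assert (0 < K + tau) by lra.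
      assert (0 <= 1/(K+tau) * (1/(K+tau))) by (apply Rle_0_sqr).
      replace (2*c/(K+tau)) with (2*c*(1/(K+tau))) by (field; lra). nra. }
    lra.
Qed.

Definition Dcsi (M K Rr alpha rho_r rho_d rho_s : R) : R :=
  alpha * K / (M - K) * (pow2 (Rr / K) - 1) + M * rho_r + K * rho_d + rho_s.
Definition Dzf (M K tau Rr alpha rho_r rho_d rho_s rho_0 T : R) : R :=
  alpha * K * gamma_u M K tau Rr T + rho_s
        + K * (rho_d + 8 * K ^ 2 * rho_0 / (3 * T))
        + M * (rho_r + 2 * K * rho_0 + 4 * K ^ 2 * rho_0 / T).

Lemma ln2_pos : 0 < ln 2.
Proof. assert (H := ln_lt_2). lra. Qed.

Lemma pow2_gt1 x : 0 < x -> 1 < pow2 x.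
Proof.
  intros Hx. unfold pow2, Rpower. rewrite <- exp_0. apply exp_increasing.
  assert (H := ln2_pos). nra.
Qed.

Lemma pow2_mono x y : x <= y -> pow2 x <= pow2 y.
Proof. intros. unfold pow2. apply Rle_Rpower; lra. Qed.

Lemma zeta_zf_eq M K tau Rr alpha rho_r rho_d rho_s rho_0 T :
  zeta_zf M K tau Rr alpha rho_r rho_d rho_s rho_0 T =
  Rr / Dzf M K tau Rr alpha rho_r rho_d rho_s rho_0 T.
Proof. reflexivity. Qed.

Lemma zeta_csi_eq M K Rr alpha rho_r rho_d rho_s : 0 < Rr ->
  0 < Dcsi M K Rr alpha rho_r rho_d rho_s ->
  zeta_csi M K Rr alpha rho_r rho_d rho_s = Rr / Dcsi M K Rr alpha rho_r rho_d rho_s.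
Proof. intros. unfold zeta_csi. fold (Dcsi M K Rr alpha rho_r rho_d rho_s). field. lra. Qed.

Lemma Dzf_ge M K tau Rr alpha rho_r rho_d rho_s rho_0 T :
  0 < Rr -> 0 < alpha -> 0 < rho_r -> 0 < rho_d -> 0 < rho_s -> 0 < rho_0 -> 0 < T ->
  1 <= K -> K <= tau < T -> K < M ->
  Dcsi M K Rr alpha rho_r rho_d rho_s + 2 * rho_0 <= Dzf M K tau Rr alpha rho_r rho_d rho_s rho_0 T.
Proof.
  intros HR Ha Hr Hd Hs H0 HT HK Ht HM.
  unfold Dzf, Dcsi, gamma_u.
  set (E' := pow2 (Rr / (K * (1 - tau / T))) - 1).
  set (E := pow2 (Rr / K) - 1).
  assert (HEE : E <= E').
  { unfold E, E'. apply Rplus_le_compat_r. apply pow2_mono.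
    assert (0 < 1 - tau/T <= 1). { assert (tau/T < 1) by (apply Rmult_lt_reg_r with T; [lra|]; unfold Rdiv; rewrite Rmult_assoc, Rinv_l; lra). split. lra.
      assert (0 < tau / T) by (apply Rdiv_lt_0_compat; lra). lra. }
    unfold Rdiv. apply Rmult_le_compat_l; [lra|]. apply Rinv_le_contravar; nra. }
  assert (HE : 0 < E) by (unfold E; assert (H1 := pow2_gt1 (Rr/K) ltac:(apply Rdiv_lt_0_compat; lra)); lra).
  assert (Hm : 0 < M - K) by lra.
  destruct (gamma_bounds E' K tau (M-K) ltac:(lra) ltac:(lra) Hm) as [G1 _].
  set (g := (K + tau) / (2 * tau * (M - K)) * E' + sqrt (((K + tau) / (2 * tau * (M - K)) * E') ^ 2 + E' / (tau * (M - K)))) in *.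
  assert (Hg : E / (M - K) <= g).
  { eapply Rle_trans; [|exact G1].
    replace (2 * ((K + tau) / (2 * tau * (M - K)) * E')) with ((1 + K/tau) * (E'/(M-K))) by (field; lra).
    assert (0 < K / tau) by (apply Rdiv_lt_0_compat; lra).
    assert (E / (M-K) <= E' / (M-K)) by (unfold Rdiv; apply Rmult_le_compat_r; [left; apply Rinv_0_lt_compat|]; lra).
    assert (0 < E' / (M-K)) by (apply Rdiv_lt_0_compat; lra). nra. }
  assert (H1 : alpha * K / (M - K) * E <= alpha * K * g).
  { replace (alpha * K / (M - K) * E) with (alpha * K * (E / (M-K))) by (field; lra).
    apply Rmult_le_compat_l; nra. }
  assert (H2 : 0 <= 8 * K ^ 2 * rho_0 / (3 * T)) by (apply Rmult_le_pos; [nra| left; apply Rinv_0_lt_compat; lra]).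
  assert (H3 : 0 <= 4 * K ^ 2 * rho_0 / T) by (apply Rmult_le_pos; [nra| left; apply Rinv_0_lt_compat; lra]).
  assert (H4 : 1 <= M * K) by nra.
  nra.
Qed.

Lemma Dzf_le M K tau Rr alpha rho_r rho_d rho_s rho_0 T Km :
  0 < Rr -> 0 < alpha -> 0 < rho_r -> 0 < rho_d -> 0 < rho_s -> 0 < rho_0 -> 0 < T ->
  1 <= K -> K <= Km -> K <= tau < T -> K < M ->
  4 * Km <= T -> 3 * Km * rho_0 <= rho_r -> 2 * Km * rho_0 <= 3 * rho_d ->
  Dzf M K tau Rr alpha rho_r rho_d rho_s rho_0 T <=
  2 * alpha * K * (pow2 (Rr / (K * (1 - tau / T))) - 1) / (M - K) + alpha / 2 + rho_s
  + 2 * K * rho_d + 2 * M * rho_r.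
Proof.
  intros HR Ha Hr Hd Hs H0 HT HK HKm Ht HM HT4 Hr3 Hd3.
  unfold Dzf, gamma_u.
  set (E' := pow2 (Rr / (K * (1 - tau / T))) - 1).
  assert (HE : 0 < E').
  { unfold E'. assert (tau/T < 1) by (apply Rmult_lt_reg_r with T; [lra|]; unfold Rdiv; rewrite Rmult_assoc, Rinv_l; lra).
    assert (H1 := pow2_gt1 (Rr / (K * (1 - tau / T))) ltac:(apply Rdiv_lt_0_compat; nra)). lra. }
  assert (Hm : 0 < M - K) by lra.
  destruct (gamma_bounds E' K tau (M-K) ltac:(lra) ltac:(lra) Hm) as [_ G2].
  set (g := (K + tau) / (2 * tau * (M - K)) * E' + sqrt (((K + tau) / (2 * tau * (M - K)) * E') ^ 2 + E' / (tau * (M - K)))) in *.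
  assert (Hg : alpha * K * g <= 2 * alpha * K * E' / (M - K) + alpha / 2).
  { assert (alpha * K * g <= alpha * K * (2 * ((K + tau) / (2 * tau * (M - K)) * E') + 1 / (K + tau)))
      by (apply Rmult_le_compat_l; nra).
    eapply Rle_trans; [exact H|].
    replace (alpha * K * (2 * ((K + tau) / (2 * tau * (M - K)) * E') + 1 / (K + tau)))
      with ((alpha * K * E' / (M - K)) * (1 + K / tau) + alpha * (K / (K + tau))) by (field; lra).
    assert (K / tau <= 1) by (apply Rmult_le_reg_r with tau; [lra|]; unfold Rdiv; rewrite Rmult_assoc, Rinv_l; lra).
    assert (K / (K+tau) <= 1/2) by (apply Rmult_le_reg_r with (K+tau); [lra|]; unfold Rdiv; rewrite Rmult_assoc, Rinv_l; lra).
    assert (0 < alpha * K * E' / (M - K)) by (apply Rdiv_lt_0_compat; [apply Rmult_lt_0_compat; [nra|lra]|lra]).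
    replace (2 * alpha * K * E' / (M - K)) with (2 * (alpha * K * E' / (M - K))) by (field; lra).
    nra. }
  assert (HA : 8 * K ^ 2 * rho_0 / (3 * T) <= rho_d).
  { apply Rmult_le_reg_r with (3 * T); [lra|]. unfold Rdiv. rewrite Rmult_assoc, Rinv_l; [|lra].
    assert (K^2 <= Km^2) by nra. assert (8 * K^2 * rho_0 <= 8 * Km^2 * rho_0) by nra.
    assert (8 * Km^2 * rho_0 = 4 * Km * (2 * Km * rho_0)) by ring.
    assert (4 * Km * (2 * Km * rho_0) <= 4 * Km * (3 * rho_d)) by nra. nra. }
  assert (HB : 4 * K ^ 2 * rho_0 / T <= rho_r / 3).
  { apply Rmult_le_reg_r with T; [lra|]. unfold Rdiv. rewrite Rmult_assoc, Rinv_l; [|lra].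
    assert (K^2 <= Km^2) by nra. assert (4 * K^2 * rho_0 <= 4 * Km^2 * rho_0) by nra.
    assert (4 * Km^2 * rho_0 = (4 * Km) * (Km * rho_0)) by ring.
    assert ((4 * Km) * (Km * rho_0) <= T * (Km * rho_0)) by (apply Rmult_le_compat_r; nra).
    assert (T * (3 * Km * rho_0) <= T * rho_r) by nra. lra. }
  assert (HC : 2 * K * rho_0 <= 2 * rho_r / 3) by nra.
  nra.
Qed.

Definition fK (Rr alpha rho_r rho_d rho_s K : R) : R :=
  2 * sqrt (alpha * rho_r * (K * (pow2 (Rr / K) - 1))) + K * (rho_r + rho_d) + rho_s.

Lemma E_pos Rr K : 0 < Rr -> 0 < K -> 0 < pow2 (Rr / K) - 1.
Proof. intros. assert (H1 := pow2_gt1 (Rr/K) ltac:(apply Rdiv_lt_0_compat; lra)). lra. Qed.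

Lemma Dcsi_ge_f M K Rr alpha rho_r rho_d rho_s :
  0 < Rr -> 0 < alpha -> 0 < rho_r -> 0 < K -> K < M ->
  fK Rr alpha rho_r rho_d rho_s K <= Dcsi M K Rr alpha rho_r rho_d rho_s.
Proof.
  intros HR Ha Hr HK HM. unfold fK, Dcsi.
  set (E := pow2 (Rr / K) - 1). assert (HE : 0 < E) by (apply E_pos; lra).
  assert (Hx : 0 <= alpha * K / (M - K) * E).
  { apply Rmult_le_pos; [|lra]. apply Rmult_le_pos; [nra| left; apply Rinv_0_lt_compat; lra]. }
  assert (Hy : 0 <= (M - K) * rho_r) by nra.
  assert (H := amgm _ _ Hx Hy).
  replace (alpha * K / (M - K) * E * ((M - K) * rho_r)) with (alpha * rho_r * (K * E)) in H by (field; lra).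
  nra.
Qed.

Lemma f_attained K Rr alpha rho_r rho_d rho_s :
  0 < Rr -> 0 < alpha -> 0 < rho_r -> 0 < K ->
  let m := sqrt (alpha * K * (pow2 (Rr / K) - 1) / rho_r) in
  0 < m /\ Dcsi (K + m) K Rr alpha rho_r rho_d rho_s = fK Rr alpha rho_r rho_d rho_s K.
Proof.
  intros HR Ha Hr HK m. unfold fK, Dcsi.
  set (E := pow2 (Rr / K) - 1) in *. assert (HE : 0 < E) by (apply E_pos; lra).
  assert (Hq : 0 < alpha * K * E / rho_r) by (apply Rdiv_lt_0_compat; [apply Rmult_lt_0_compat; nra|lra]).
  assert (Hm : 0 < m) by (apply sqrt_lt_R0; exact Hq).
  assert (Hmm : m * m = alpha * K * E / rho_r) by (apply sqrt_sqrt; lra).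
  split; [exact Hm|].
  assert (Hs : sqrt (alpha * rho_r * (K * E)) = m * rho_r).
  { rewrite <- (sqrt_square (m * rho_r)) by nra. f_equal.
    replace (m * rho_r * (m * rho_r)) with ((m * m) * rho_r * rho_r) by ring. rewrite Hmm. field. lra. }
  rewrite Hs. replace (K + m - K) with m by ring.
  replace (alpha * K / m * E) with ((alpha * K * E / rho_r) / m * rho_r) by (field; split; lra).
  rewrite <- Hmm. field. lra.
Qed.

Lemma f_cont Rr alpha rho_r rho_d rho_s c : 0 < Rr -> 0 < alpha -> 0 < rho_r -> 0 < c ->
  continuity_pt (fK Rr alpha rho_r rho_d rho_s) c.
Proof.
  intros HR Ha Hr Hc.
  set (h := fun K => alpha * rho_r * (K * (exp (Rr / K * ln 2) - 1))).
  assert (Hh : continuity_pt h c).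
  { apply derivable_continuous_pt. unfold h. reg. lra. }
  assert (Hh0 : 0 <= h c).
  { unfold h. assert (H := E_pos Rr c HR Hc). unfold pow2, Rpower in H.
    apply Rmult_le_pos; [nra|]. apply Rmult_le_pos; lra. }
  assert (Hsq : continuity_pt (comp sqrt h) c) by (apply continuity_pt_comp; [exact Hh| apply continuity_pt_sqrt; exact Hh0]).
  assert (E : fK Rr alpha rho_r rho_d rho_s = fun K => 2 * comp sqrt h K + K * (rho_r + rho_d) + rho_s).
  { apply functional_extensionality. intros K. unfold fK, comp, h, pow2, Rpower. reflexivity. }
  rewrite E.
  apply continuity_pt_plus; [apply continuity_pt_plus|].
  - apply continuity_pt_mult; [apply continuity_pt_const; intros ?; reflexivity| exact Hsq].
  - apply continuity_pt_mult; [apply derivable_continuous_pt; reg | apply continuity_pt_const; intros ?; reflexivity].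
  - apply continuity_pt_const; intros ?; reflexivity.
Qed.

Lemma P_nonneg a : 0 <= exp a * a - exp a + 1.
Proof.
  assert (H := exp_ineq1_le (-a)). assert (E : exp a * exp (-a) = 1) by (rewrite <- exp_plus, <- exp_0; f_equal; ring).
  assert (Hp := exp_pos a). nra.
Qed.

Lemma case2_core A L Ks Km a b S1 S2 :
  0 < A -> 0 < L -> 0 < Km -> 3 * Km / 4 < Ks <= Km -> 0 < b ->
  a * Km * 3 = 4 * b * Ks ->
  0 <= S2 -> S2 * S2 = A * Km * (exp a - 1) ->
  0 <= S1 -> S1 * S1 = A * Ks * (exp b - 1) ->
  A * (exp a * a - exp a + 1) * (exp a * a - exp a + 1) < L * L * Km * (exp a - 1) ->
  4 * S2 + 2 * Km * L <= 16/3 * S1 + 8/3 * Ks * L.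
Proof.
  intros HA HL HKm HKs Hb Hab HS2 HS2e HS1 HS1e HD2.
  set (P := exp a * a - exp a + 1) in *.
  assert (HP0 : 0 <= P) by apply P_nonneg.
  assert (Ha : b < a) by nra.
  assert (Ha4 : 4 * (a - b) <= a) by nra.
  set (w := a - b).
  assert (Hw : 0 < w) by (unfold w; lra).
  assert (HE' : 0 < exp a - 1) by (assert (H := exp_increasing 0 a ltac:(nra)); rewrite exp_0 in H; lra).
  assert (HS2p : 0 < S2).
  { destruct HS2 as [h|h]; [exact h|]. rewrite <- h in HS2e.
    assert (0 < A * Km * (exp a - 1)) by (apply Rmult_lt_0_compat; nra). nra. }
  assert (HLS : A * P <= L * S2).
  { assert ((A * P) * (A * P) < (L * S2) * (L * S2)).
    { replace ((L * S2) * (L * S2)) with (L * L * (S2 * S2)) by ring. rewrite HS2e.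
      replace (L * L * (A * Km * (exp a - 1))) with (A * (L * L * Km * (exp a - 1))) by ring.
      replace (A * P * (A * P)) with (A * (A * P * P)) by ring.
      apply Rmult_lt_compat_l; lra. }
    assert (0 <= A * P) by nra. assert (0 <= L * S2) by nra. nra. }
  set (nu := exp (- (w / 2))).
  assert (Hnu0 : 0 < nu) by apply exp_pos.
  assert (Hnu1 : 1 - w/2 <= nu) by (unfold nu; assert (H := exp_ineq1_le (- (w/2))); lra).
  assert (Hnu2 : nu * nu = exp (- w)) by (unfold nu; rewrite <- exp_plus; f_equal; field).
  assert (HF1 : 3/4 * Km * (nu * nu) * (exp a - 1) <= Ks * (exp b - 1)).
  { assert (Hw0 : 0 <= w <= a) by (unfold w in *; lra). assert (Ha0 : 0 < a) by lra.
    assert (Hbern := bern w a Ha0 Hw0).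
    assert (Eb : exp b = exp (- w) * exp a) by (rewrite <- exp_plus; f_equal; unfold w; ring).
    assert (Ew : 1 = exp (- w) * exp w) by (rewrite <- exp_plus, <- exp_0; f_equal; ring).
    assert (Hew : 0 < exp (- w)) by apply exp_pos.
    assert (Hk : Ks * (b / a) = 3/4 * Km).
    { apply Rmult_eq_reg_r with a; [|lra]. unfold Rdiv. rewrite Rmult_assoc, Rmult_assoc, Rinv_l; nra. }
    assert (Hba : b / a = 1 - w / a) by (unfold w; field; lra).
    assert (Hst : (b / a) * (exp a - 1) <= exp a - exp w) by (rewrite Hba; lra).
    assert (exp b - 1 = exp (-w) * (exp a - exp w)) by (rewrite Eb, Ew at 1; ring).
    rewrite H, Hnu2.
    assert (Ks * (exp (-w) * (exp a - exp w)) >= Ks * (exp (-w) * ((b/a) * (exp a - 1)))).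
    { apply Rle_ge. apply Rmult_le_compat_l; [lra|]. apply Rmult_le_compat_l; lra. }
    replace (Ks * (exp (-w) * ((b/a) * (exp a - 1)))) with ((Ks * (b/a)) * exp (-w) * (exp a - 1)) in H0 by ring.
    rewrite Hk in H0. lra. }
  assert (HS12 : 6/7 * nu * A * Km * (exp a - 1) <= S1 * S2).
  { assert (Hsq : (6/7 * nu * A * Km * (exp a - 1)) * (6/7 * nu * A * Km * (exp a - 1)) <= (S1 * S2) * (S1 * S2)).
    { replace ((S1 * S2) * (S1 * S2)) with ((S1 * S1) * (S2 * S2)) by ring. rewrite HS1e, HS2e.
      replace (A * Ks * (exp b - 1) * (A * Km * (exp a - 1))) with ((A * A * Km * (exp a - 1)) * (Ks * (exp b - 1))) by ring.
      assert (0 <= A * A * Km * (exp a - 1)) by (apply Rmult_le_pos; [|lra]; apply Rmult_le_pos; nra).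
      assert (H1 : (A * A * Km * (exp a - 1)) * (3/4 * Km * (nu * nu) * (exp a - 1)) <= (A * A * Km * (exp a - 1)) * (Ks * (exp b - 1)))
        by (apply Rmult_le_compat_l; lra).
      assert (H2 : (6/7 * nu * A * Km * (exp a - 1)) * (6/7 * nu * A * Km * (exp a - 1)) <= (A * A * Km * (exp a - 1)) * (3/4 * Km * (nu * nu) * (exp a - 1))).
      { replace ((A * A * Km * (exp a - 1)) * (3/4 * Km * (nu * nu) * (exp a - 1))) with
          (3/4 * ((nu * A * Km * (exp a - 1)) * (nu * A * Km * (exp a - 1)))) by ring.
        replace ((6/7 * nu * A * Km * (exp a - 1)) * (6/7 * nu * A * Km * (exp a - 1))) with
          (36/49 * ((nu * A * Km * (exp a - 1)) * (nu * A * Km * (exp a - 1)))) by field.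
        assert (0 <= (nu * A * Km * (exp a - 1)) * (nu * A * Km * (exp a - 1))) by apply Rle_0_sqr. lra. }
      lra. }
    assert (0 <= 6/7 * nu * A * Km * (exp a - 1)) by (apply Rmult_le_pos; [|lra]; apply Rmult_le_pos; [|lra]; apply Rmult_le_pos; lra).
    assert (0 <= S1 * S2) by nra. nra. }
  set (D := 8/3 * Ks - 2 * Km).
  assert (HD : 0 < D) by (unfold D; lra).
  assert (Hmain : 4 * Km * (exp a - 1) <= D * P + 32/7 * nu * Km * (exp a - 1)).
  { destruct (Rlt_le_dec nu (7/8)) as [Hn|Hn].
    - assert (Hk := key_poly a w nu Hw Ha4 Hnu0 Hnu1 Hn).
      assert (HPa : (a - 1) * (exp a - 1) <= P) by (unfold P; assert (0 <= a) by lra; nra).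
      assert (HDb : D * b = 2 * Km * w) by (unfold D, w; nra).
      assert (Hb' : b = a - w) by (unfold w; ring).
      assert (Hc : 0 <= D * (a - 1) + (32/7 * nu - 4) * Km).
      { apply Rmult_le_reg_r with b; [lra|]. rewrite Rmult_0_l.
        replace ((D * (a - 1) + (32/7 * nu - 4) * Km) * b) with ((D * b) * (a - 1) + (32/7 * nu - 4) * Km * b) by ring.
        rewrite HDb, Hb'. nra. }
      assert (D * ((a - 1) * (exp a - 1)) <= D * P) by (apply Rmult_le_compat_l; lra).
      assert (0 <= (D * (a - 1) + (32/7 * nu - 4) * Km) * (exp a - 1)) by (apply Rmult_le_pos; lra).
      nra.
    - assert (0 <= D * P) by nra.
      assert (4 * Km * (exp a - 1) <= 32/7 * nu * Km * (exp a - 1)).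
      { replace (4 * Km * (exp a - 1)) with (4 * (Km * (exp a - 1))) by ring.
        replace (32/7 * nu * Km * (exp a - 1)) with (32/7 * nu * (Km * (exp a - 1))) by ring.
        apply Rmult_le_compat_r; nra. }
      lra. }
  apply Rmult_le_reg_r with S2; [exact HS2p|].
  assert (H1 : D * (A * P) <= D * (L * S2)) by (apply Rmult_le_compat_l; lra).
  assert (H2 : A * (4 * Km * (exp a - 1)) <= A * (D * P + 32/7 * nu * Km * (exp a - 1))) by (apply Rmult_le_compat_l; lra).
  assert (H3 : 16/3 * (6/7 * nu * A * Km * (exp a - 1)) <= 16/3 * (S1 * S2)) by lra.
  replace ((4 * S2 + 2 * Km * L) * S2) with (4 * (S2 * S2) + 2 * Km * L * S2) by ring.
  rewrite HS2e. assert (HDL : D * (L * S2) = 8/3 * Ks * L * S2 - 2 * Km * L * S2) by (unfold D; ring).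
  assert (HDP : A * (D * P + 32/7 * nu * Km * (exp a - 1)) = D * (A * P) + 32/7 * nu * A * Km * (exp a - 1)) by ring.
  lra.
Qed.

Lemma div_le_div Rr x y : 0 < Rr -> 0 < x -> x <= y -> Rr / y <= Rr / x.
Proof. intros. unfold Rdiv. apply Rmult_le_compat_l; [lra|]. apply Rinv_le_contravar; lra. Qed.

Lemma div_lt_div Rr x y : 0 < Rr -> 0 < x -> x < y -> Rr / y < Rr / x.
Proof. intros. unfold Rdiv. apply Rmult_lt_compat_l; [lra|]. apply Rinv_lt_contravar; nra. Qed.

Theorem theorem4 (Rr alpha rho_r rho_d rho_s rho_0 T : R) :
  Rr > 0 -> alpha > 1 -> rho_r > 0 -> rho_d > 0 -> rho_s > 0 -> rho_0 > 0 ->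
  T > 1 ->
  let beta := rho_d / rho_r in
  let delta := rho_s / rho_r in
  let Km := Kmax rho_r rho_d rho_0 T in
  (* (A) *) Km > 10 ->
  (* (D.1) *) rho_r > alpha / (2 * delta) ->
  (* (D.2) *) rho_r > 3 * alpha / (4 * (1 + beta) ^ 2 * Rr) * (g (4 * Rr / (3 * Km))) ^ 2 ->
  (* (D.3) *) rho_r < alpha / (1 + beta) ^ 2 * ((g Rr) ^ 2 / Rr) ->
  exists zzf zcsi : R,
    is_zeta'_zf Rr alpha rho_r rho_d rho_s rho_0 T zzf /\
    is_zeta'_csi Rr alpha rho_r rho_d rho_s rho_0 T zcsi /\
    3 / 8 < zzf / zcsi < 1.
Proof.
  intros HR Ha Hr Hd Hs H0 HT beta delta Km HA HD1 HD2 HD3.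
  assert (HKm1 : Km <= T / 4) by (unfold Km, Kmax; apply Rmin_l).
  assert (HKm2 : Km <= 1 / (3 * (rho_0 / rho_r))) by (unfold Km, Kmax; eapply Rle_trans; [apply Rmin_r| apply Rmin_l]).
  assert (HKm3 : Km <= 3 * (rho_d / rho_r) / (2 * (rho_0 / rho_r))) by (unfold Km, Kmax; eapply Rle_trans; [apply Rmin_r| apply Rmin_r]).

  assert (HT4 : 4 * Km <= T) by lra.
  assert (Hr3 : 3 * Km * rho_0 <= rho_r).
  { replace (1 / (3 * (rho_0 / rho_r))) with (rho_r / (3 * rho_0)) in HKm2 by (field; lra).
    apply Rmult_le_compat_r with (r := 3 * rho_0) in HKm2; [|lra].
    unfold Rdiv in HKm2. rewrite Rmult_assoc, Rinv_l in HKm2; lra. }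
  assert (Hd3 : 2 * Km * rho_0 <= 3 * rho_d).
  { replace (3 * (rho_d / rho_r) / (2 * (rho_0 / rho_r))) with (3 * rho_d / (2 * rho_0)) in HKm3 by (field; lra).
    apply Rmult_le_compat_r with (r := 2 * rho_0) in HKm3; [|lra].
    unfold Rdiv in HKm3. rewrite Rmult_assoc, Rinv_l in HKm3; lra. }
  assert (Hs2 : alpha < 2 * rho_s).
  { unfold delta in HD1. replace (alpha / (2 * (rho_s / rho_r))) with (rho_r * (alpha / (2 * rho_s))) in HD1 by (field; lra).
    assert (alpha / (2 * rho_s) < 1) by nra.
    apply Rmult_lt_compat_r with (r := 2 * rho_s) in H; [|lra].
    unfold Rdiv in H. rewrite Rmult_assoc, Rinv_l in H; lra. }
  set (A := alpha * rho_r).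
  set (L := rho_r + rho_d).
  assert (HApos : 0 < A) by (unfold A; nra).
  assert (HLpos : 0 < L) by (unfold L; lra).
  set (a := 4 * Rr / (3 * Km) * ln 2).
  set (P := exp a * a - exp a + 1).
  assert (Hapos : 0 < a) by (unfold a; assert (H := ln2_pos); apply Rmult_lt_0_compat; [apply Rdiv_lt_0_compat|]; lra).
  assert (HE'pos : 0 < exp a - 1) by (assert (H := exp_increasing 0 a Hapos); rewrite exp_0 in H; lra).
  assert (HD2' : A * P * P < L * L * Km * (exp a - 1)).
  { unfold g, pow2, Rpower in HD2. fold a in HD2.
    replace (exp a * (4 * Rr / (3 * Km)) * ln 2 - exp a + 1) with P in HD2 by (unfold P, a; ring).
    assert (Hq : 0 <= 4 * Rr / (3 * Km) / (exp a - 1)) by (apply Rmult_le_pos; [apply Rmult_le_pos; [lra| left; apply Rinv_0_lt_compat; lra]| left; apply Rinv_0_lt_compat; lra]).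
    replace ((sqrt (4 * Rr / (3 * Km) / (exp a - 1)) * P) ^ 2) with ((4 * Rr / (3 * Km) / (exp a - 1)) * (P * P)) in HD2
      by (rewrite <- (sqrt_sqrt _ Hq) at 1; ring).
    replace (3 * alpha / (4 * (1 + beta) ^ 2 * Rr) * (4 * Rr / (3 * Km) / (exp a - 1) * (P * P)))
      with (rho_r * (A * P * P / (L * L * Km * (exp a - 1)))) in HD2 by (unfold beta, A, L; field; repeat split; lra).
    assert (A * P * P / (L * L * Km * (exp a - 1)) < 1) by nra.
    assert (0 < L * L * Km * (exp a - 1)) by (apply Rmult_lt_0_compat; [|lra]; apply Rmult_lt_0_compat; nra).
    apply Rmult_lt_compat_r with (r := L * L * Km * (exp a - 1)) in H; [|lra].
    unfold Rdiv in H. rewrite Rmult_assoc, Rinv_l in H; lra. }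
  destruct (continuity_ab_min (fK Rr alpha rho_r rho_d rho_s) 1 Km ltac:(lra)
     ltac:(intros c Hc; apply f_cont; lra)) as [Ks [Hmin HKs]].
  set (fs := fK Rr alpha rho_r rho_d rho_s Ks).
  assert (Hfs : rho_s <= fs).
  { unfold fs, fK. assert (H := sqrt_pos (alpha * rho_r * (Ks * (pow2 (Rr / Ks) - 1)))). nra. }
  destruct (f_attained Ks Rr alpha rho_r rho_d rho_s ltac:(lra) ltac:(lra) ltac:(lra) ltac:(lra)) as [Hms Hatt].
  set (ms := sqrt (alpha * Ks * (pow2 (Rr / Ks) - 1) / rho_r)) in *.
  assert (Hpt : exists M K tau, (1 <= K <= Km) /\ (K <= tau < T) /\ M > K /\
            Dzf M K tau Rr alpha rho_r rho_d rho_s rho_0 T < 8/3 * fs).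
  { destruct (Rle_lt_dec Ks (3 * Km / 4)) as [Hc|Hc].
    - exists (4 * Ks / 3 + ms), (4 * Ks / 3), (T / 4).
      assert (Hk : 1 <= 4 * Ks / 3 <= Km) by lra.
      assert (Ht : 4 * Ks / 3 <= T / 4 < T) by lra.
      split; [exact Hk|]. split; [exact Ht|]. split; [lra|].
      assert (Hle := Dzf_le (4 * Ks / 3 + ms) (4 * Ks / 3) (T / 4) Rr alpha rho_r rho_d rho_s rho_0 T Km
        HR ltac:(lra) Hr Hd Hs H0 ltac:(lra) ltac:(lra) ltac:(lra) Ht ltac:(lra) HT4 Hr3 Hd3).
      replace (Rr / (4 * Ks / 3 * (1 - T / 4 / T))) with (Rr / Ks) in Hle by (field; lra).
      replace (4 * Ks / 3 + ms - 4 * Ks / 3) with ms in Hle by ring.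
      unfold Dcsi in Hatt. replace (Ks + ms - Ks) with ms in Hatt by ring. fold fs in Hatt.
      set (E := pow2 (Rr / Ks) - 1) in *.
      assert (HE : 0 < E) by (apply E_pos; lra).
      replace (2 * alpha * (4 * Ks / 3) * E / ms) with (8/3 * (alpha * Ks / ms * E)) in Hle by (field; lra).
      assert (0 < alpha * Ks / ms * E) by (apply Rmult_lt_0_compat; [apply Rdiv_lt_0_compat; nra|lra]).
      nra.
    - set (Ep := pow2 (Rr / (Km * (1 - T / 4 / T))) - 1).
      assert (HEp : Ep = exp a - 1).
      { unfold Ep, pow2, Rpower, a. replace (Rr / (Km * (1 - T / 4 / T))) with (4 * Rr / (3 * Km)) by (field; lra). reflexivity. }
      set (m := sqrt (alpha * Km * Ep / rho_r)).
      assert (Hq : 0 < alpha * Km * Ep / rho_r) by (apply Rdiv_lt_0_compat; [apply Rmult_lt_0_compat; [nra|lra]|lra]).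
      assert (Hm : 0 < m) by (apply sqrt_lt_R0; exact Hq).
      assert (Hmm : m * m = alpha * Km * Ep / rho_r) by (apply sqrt_sqrt; lra).
      exists (Km + m), Km, (T / 4).
      assert (Hk : 1 <= Km <= Km) by lra.
      assert (Ht : Km <= T / 4 < T) by lra.
      split; [exact Hk|]. split; [exact Ht|]. split; [lra|].
      assert (Hle := Dzf_le (Km + m) Km (T / 4) Rr alpha rho_r rho_d rho_s rho_0 T Km
        HR ltac:(lra) Hr Hd Hs H0 ltac:(lra) ltac:(lra) ltac:(lra) Ht ltac:(lra) HT4 Hr3 Hd3).
      fold Ep in Hle. replace (Km + m - Km) with m in Hle by ring.
      replace (2 * alpha * Km * Ep / m) with (2 * (m * rho_r)) in Hle.
      2:{ apply Rmult_eq_reg_r with m; [|lra]. replace (2 * alpha * Km * Ep / m * m) with (2 * (alpha * Km * Ep)) by (field; lra).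
          replace (2 * (m * rho_r) * m) with (2 * ((m * m) * rho_r)) by ring. rewrite Hmm. field. lra. }
      set (b := Rr / Ks * ln 2).
      set (S1 := sqrt (alpha * rho_r * (Ks * (pow2 (Rr / Ks) - 1)))).
      assert (HS1 : 0 <= S1) by apply sqrt_pos.
      assert (HE : 0 < pow2 (Rr / Ks) - 1) by (apply E_pos; lra).
      assert (HS1e : S1 * S1 = A * Ks * (exp b - 1)).
      { unfold S1. rewrite sqrt_sqrt. unfold A, b, pow2, Rpower. ring. apply Rmult_le_pos; [nra|]. apply Rmult_le_pos; lra. }
      assert (HS2e : (m * rho_r) * (m * rho_r) = A * Km * (exp a - 1)).
      { replace ((m * rho_r) * (m * rho_r)) with ((m * m) * rho_r * rho_r) by ring. rewrite Hmm, <- HEp. unfold A. field. lra. }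
      assert (Hb : 0 < b) by (unfold b; assert (H := ln2_pos); apply Rmult_lt_0_compat; [apply Rdiv_lt_0_compat|]; lra).
      assert (Hab : a * Km * 3 = 4 * b * Ks) by (unfold a, b; field; lra).
      assert (Hcore := case2_core A L Ks Km a b S1 (m * rho_r) HApos HLpos ltac:(lra) ltac:(lra) Hb Hab
         ltac:(nra) HS2e HS1 HS1e HD2').
      assert (Hfs_eq : fs = 2 * S1 + Ks * L + rho_s) by reflexivity.
      unfold L in Hcore, Hfs_eq. nra. }
  assert (Hub : forall z, zf_values Rr alpha rho_r rho_d rho_s rho_0 T z -> z <= Rr / (fs + 2 * rho_0)).
  { intros z [M [K [tau [[HK1 HK2] [[Ht1 Ht2] [HM Hz]]]]]].
    rewrite Hz, zeta_zf_eq.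
    assert (H1 := Dzf_ge M K tau Rr alpha rho_r rho_d rho_s rho_0 T HR ltac:(lra) Hr Hd Hs H0 ltac:(lra) HK1 (conj Ht1 Ht2) HM).
    assert (H2 := Dcsi_ge_f M K Rr alpha rho_r rho_d rho_s HR ltac:(lra) Hr ltac:(lra) HM).
    assert (H3 := Hmin K (conj HK1 HK2)). fold fs in H3.
    apply div_le_div; lra. }
  destruct Hpt as [Mp [Kp [tp [HKp [Htp [HMp HDp]]]]]].
  assert (Hne : exists z, zf_values Rr alpha rho_r rho_d rho_s rho_0 T z).
  { exists (zeta_zf Mp Kp tp Rr alpha rho_r rho_d rho_s rho_0 T). exists Mp, Kp, tp. auto. }
  destruct (completeness (zf_values Rr alpha rho_r rho_d rho_s rho_0 T) ltac:(exists (Rr / (fs + 2 * rho_0)); intros z Hz; apply Hub; exact Hz) Hne) as [zzf Hlub].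
  assert (Hp_in : zf_values Rr alpha rho_r rho_d rho_s rho_0 T (zeta_zf Mp Kp tp Rr alpha rho_r rho_d rho_s rho_0 T))
    by (exists Mp, Kp, tp; auto).
  assert (Hz1 : Rr / Dzf Mp Kp tp Rr alpha rho_r rho_d rho_s rho_0 T <= zzf)
    by (rewrite <- zeta_zf_eq; apply (proj1 Hlub); exact Hp_in).
  assert (Hz2 : zzf <= Rr / (fs + 2 * rho_0)) by (apply (proj2 Hlub); intros z Hz; apply Hub; exact Hz).
  assert (HDpos : 0 < Dzf Mp Kp tp Rr alpha rho_r rho_d rho_s rho_0 T).
  { destruct HKp as [k1 k2], Htp as [t1 t2]. assert (H1 := Dzf_ge Mp Kp tp Rr alpha rho_r rho_d rho_s rho_0 T HR ltac:(lra) Hr Hd Hs H0 ltac:(lra) k1 (conj t1 t2) HMp).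
    assert (H4 := Dcsi_ge_f Mp Kp Rr alpha rho_r rho_d rho_s HR ltac:(lra) Hr ltac:(lra) HMp).
    unfold fK in H4. assert (H5 := sqrt_pos (alpha * rho_r * (Kp * (pow2 (Rr / Kp) - 1)))). nra. }
  assert (Hz3 : Rr / (8/3 * fs) < zzf) by (eapply Rlt_le_trans; [apply div_lt_div; [lra|exact HDpos|exact HDp]|exact Hz1]).
  assert (Hz4 : zzf < Rr / fs) by (eapply Rle_lt_trans; [exact Hz2| apply div_lt_div; lra]).
  exists zzf, (Rr / fs).
  split; [exact Hlub|].
  split.
  - split.
    + exists (Ks + ms), Ks. split; [exact HKs|]. split; [lra|].
      rewrite zeta_csi_eq; [|lra| rewrite Hatt; fold fs; lra]. rewrite Hatt. reflexivity.
    + intros z [M [K [HK [HM Hz]]]]. rewrite Hz.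
      assert (H2 := Dcsi_ge_f M K Rr alpha rho_r rho_d rho_s HR ltac:(lra) Hr ltac:(lra) HM).
      assert (H3 := Hmin K HK). fold fs in H3.
      rewrite zeta_csi_eq; [|lra|lra]. apply div_le_div; lra.
  - assert (Hfs0 : 0 < fs) by lra.
    replace (zzf / (Rr / fs)) with (zzf * fs / Rr) by (field; lra).
    replace (Rr / (8/3 * fs)) with (3/8 * Rr / fs) in Hz3 by (field; lra).
    assert (H1 : 3/8 * Rr < zzf * fs).
    { apply Rmult_lt_compat_r with (r := fs) in Hz3; [|lra]. unfold Rdiv in Hz3. rewrite Rmult_assoc, Rinv_l in Hz3; lra. }
    assert (H2 : zzf * fs < Rr).
    { apply Rmult_lt_compat_r with (r := fs) in Hz4; [|lra]. unfold Rdiv in Hz4. rewrite Rmult_assoc, Rinv_l in Hz4; lra. }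
    split.
    + apply Rmult_lt_reg_r with Rr; [lra|]. replace (zzf * fs / Rr * Rr) with (zzf * fs) by (field; lra). lra.
    + apply Rmult_lt_reg_r with Rr; [lra|]. replace (zzf * fs / Rr * Rr) with (zzf * fs) by (field; lra). lra.
Qed.
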